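(* If $A\subseteq\omega$ is c.e. and has density $1$ effectively, then $A$ has a computable subset $B$ which has density $1$ effectively.
   Context: For $S\subseteq\omega$ and $n>0$, $\rho_n(S)=|S\cap[0,n)|/n$. For a set $A$ of density $1$ (i.e. $\lim_n\rho_n(A)=1$), a function $w:\omega\to\omega$ witnesses that $A$ has density $1$ if for all $k$ and all $n\ge w(k)$, $\rho_n(A)\ge 1-2^{-k}$. The set $A$ has density $1$ effectively if there is a computable function which witnesses that $A$ has density $1$. *)

(* Defs.v *)
From mathcomp Require Import all_boot all_order all_algebra.
Set Implicit Arguments. Unset Strict Implicit. Unset Printing Implicit Defensive.
Import Order.TTheory GRing.Theory Num.Theory.

(* Syntax of partial recursive function codes (arity given by the argument list). *)
Inductive code : Type :=
| Zero : code
| Succ : code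
| Proj : nat -> code
| Comp : code -> list code -> code
| Prec : code -> code -> code
| Mu   : code -> code.

Inductive ev : code -> seq nat -> nat -> Prop :=
| ev_zero v : ev Zero v 0
| ev_succ x v : ev Succ (x :: v) x.+1
| ev_proj i v : (i < size v)%N -> ev (Proj i) v (nth 0%N v i)
| ev_comp f gs v ys y : evs gs v ys -> ev f ys y -> ev (Comp f gs) v y
| ev_prec0 f g v y : ev f v y -> ev (Prec f g) (0%N :: v) y
| ev_precS f g n v z y :
    ev (Prec f g) (n :: v) z -> ev g (n :: z :: v) y -> ev (Prec f g) (n.+1 :: v) y
| ev_mu f v n :
    ev f (n :: v) 0 -> (forall m, (m < n)%N -> exists k, ev f (m :: v) k.+1) ->
    ev (Mu f) v n
with evs : list code -> seq nat -> seq nat -> Prop :=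
| evs_nil v : evs nil v [::]
| evs_cons g gs v y ys : ev g v y -> evs gs v ys -> evs (g :: gs) v (y :: ys).

Definition computable (f : nat -> nat) : Prop :=
  exists c, forall x, ev c [:: x] (f x).

(* Subsets of omega are represented by (classical) boolean predicates;
   no computability is implied by this representation. *)
Definition computable_set (B : pred nat) : Prop :=
  computable (fun x => nat_of_bool (B x)).

Definition ce (A : pred nat) : Prop :=
  exists c, forall x, A x <-> exists y, ev c [:: x] y.

Local Open Scope ring_scope.

Definition rho (n : nat) (S : pred nat) : rat :=
  (count S (iota 0 n))%:R / n%:R.

Definition has_density1 (S : pred nat) : Prop :=
  forall eps : rat, 0 < eps -> exists N : nat, forall n : nat,
    (0 < n)%N -> (N <= n)%N -> `|rho n S - 1| < eps.

Definition witnesses_density1 (w : nat -> nat) (S : pred nat) : Prop :=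
  forall k n : nat, (0 < n)%N -> (w k <= n)%N -> 1 - (2%:R ^+ k)^-1 <= rho n S.

Definition density1_effectively (S : pred nat) : Prop :=
  has_density1 S /\ exists w, computable w /\ witnesses_density1 w S.

(* Main.v *)
Require Import Defs.
From mathcomp Require Import all_boot all_order all_algebra.
From Stdlib Require List.
From mathcomp Require Import zify lra.
Set Implicit Arguments. Unset Strict Implicit. Unset Printing Implicit Defensive.

Inductive st := Srch | Fail | Found of nat.

Fixpoint srch (r : nat -> option nat) (j : nat) : st :=
  match j with
  | 0 => Srch
  | j'.+1 => match srch r j' with
             | Srch => match r j' with Some 0 => Found j' | Some _ => Srch | None => Fail end
             | x => x end
  end.

Fixpoint precrun (rf : option nat) (rg : nat -> nat -> option nat) (n : nat) : option nat :=
  match n with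
  | 0 => rf
  | m.+1 => match precrun rf rg m with Some z => rg m z | None => None end
  end.

Fixpoint allsome (l : seq (option nat)) : option (seq nat) :=
  match l with
  | [::] => Some [::]
  | o :: l' => match o, allsome l' with Some y, Some ys => Some (y :: ys) | _, _ => None end
  end.

Fixpoint run (s : nat) (c : code) (v : seq nat) {struct c} : option nat :=
  match c with
  | Zero => Some 0
  | Succ => if v is x :: _ then Some x.+1 else None
  | Proj i => if (i < size v)%N then Some (nth 0 v i) else None
  | Comp f gs =>
      match (fix runs (gs : list code) : option (seq nat) :=
               match gs with
               | nil => Some [::]
               | g :: gs' => match run s g v, runs gs' with
                             | Some y, Some ys => Some (y :: ys) | _, _ => None end
               end) gs with
      | Some ys => run s f ys | None => None end
  | Prec f g => if v is n :: v' then precrun (run s f v') (fun m z => run s g (m :: z :: v')) n else None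
  | Mu f => match srch (fun m => run s f (m :: v)) s with Found m => Some m | _ => None end
  end.

Lemma run_comp s f gs v : run s (Comp f gs) v =
  match allsome (map (fun g => run s g v) gs) with Some ys => run s f ys | None => None end.
Proof.
rewrite /=; congr (match _ with Some ys => _ | None => _ end).
by elim: gs => //= g gs ->.
Qed.

Definition code_ind2 (P : code -> Prop) (HZ : P Zero) (HS : P Succ) (HP : forall i, P (Proj i))
  (HC : forall f gs, P f -> List.Forall P gs -> P (Comp f gs))
  (HR : forall f g, P f -> P g -> P (Prec f g)) (HM : forall f, P f -> P (Mu f)) : forall c, P c :=
  fix F c := match c with
  | Zero => HZ | Succ => HS | Proj i => HP i
  | Comp f gs => HC f gs (F f) ((fix G gs := match gs return List.Forall P gs with
        | nil => List.Forall_nil _ | g :: gs' => List.Forall_cons _ (F g) (G gs') end) gs)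
  | Prec f g => HR f g (F f) (F g)
  | Mu f => HM f (F f) end.

Lemma srch_found r j m : srch r j = Found m ->
  (m < j)%N /\ r m = Some 0 /\ forall m', (m' < m)%N -> exists k, r m' = Some k.+1.
Proof.
elim: j => //= j IH.
have Hs : srch r j = Srch -> forall m', (m' < j)%N -> exists k, r m' = Some k.+1.
  elim: j {IH} => //= j IH'.
  case E: (srch r j) => //; case E2: (r j) => [[|k]|] //= _ m' lm'.
  rewrite ltnS leq_eqVlt in lm'; case/orP: lm' => [/eqP->|]; first by exists k.
  by apply: IH'.
case E: (srch r j) => [| |m0].
- case E2: (r j) => [[|k]|] //= [<-]; split => //; split => //.
  by apply: Hs.
- by [].
- move=> [eq]; subst m0; case: (IH E) => h1 h2; split => //; exact: ltnW.
Qed.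

Lemma srch_srch r j : (forall m', (m' < j)%N -> exists k, r m' = Some k.+1) -> srch r j = Srch.
Proof.
elim: j => //= j IH H; rewrite IH; last by move=> m' h; apply: H; exact: ltnW.
by case: (H j (ltnSn j)) => k ->.
Qed.

Lemma srch_found2 r m : r m = Some 0 -> (forall m', (m' < m)%N -> exists k, r m' = Some k.+1) ->
  forall j, (m < j)%N -> srch r j = Found m.
Proof.
move=> H0 H j; elim: j => // j IH; rewrite ltnS leq_eqVlt => /orP [/eqP<-|lt] /=.
  by rewrite srch_srch // H0.
by rewrite IH.
Qed.

Lemma run_sound : forall c s v y, run s c v = Some y -> ev c v y.
Proof.
elim/code_ind2.
- by move=> s v y [<-]; constructor.
- by move=> s [|x v] y //= [<-]; constructor.
- move=> i s v y /=; case: ifP => // h [<-]; by constructor.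
- move=> f gs IHf IHgs s v y; rewrite run_comp.
  case E: (allsome _) => [ys|] // H.
  apply: ev_comp (IHf _ _ _ H).
  elim: IHgs ys E {H} => [|g gs' IHg _ IH] ys /=; first by move=> [<-]; constructor.
  case E1: (run s g v) => [y1|] //; case E2: (allsome _) => [ys1|] // [<-].
  by constructor; [exact: IHg E1 | exact: IH].
- move=> f g IHf IHg s [|n v] y //=.
  elim: n y => [|n IH] y /=; first by move=> H; constructor; exact: IHf H.
  case E: (precrun _ _ n) => [z|] // H.
  by apply: ev_precS (IH _ E) (IHg _ _ _ H).
- move=> f IHf s v y /=; case E: (srch _ _) => [| |m] // [<-].
  case: (srch_found E) => _ [h0 hlt].
  constructor; first exact: IHf h0.
  move=> m' lm'; case: (hlt m' lm') => k hk; exists k; exact: IHf hk.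
Qed.

Lemma precrun_mono rf rf' rg rg' n y :
  (forall y, rf = Some y -> rf' = Some y) -> (forall m z y, rg m z = Some y -> rg' m z = Some y) ->
  precrun rf rg n = Some y -> precrun rf' rg' n = Some y.
Proof.
move=> H1 H2; elim: n y => [|n IH] y /=; first exact: H1.
case E: (precrun rf rg n) => [z|] // H; rewrite (IH _ E); exact: H2.
Qed.

Lemma run_mono : forall c s s' v y, (s <= s')%N -> run s c v = Some y -> run s' c v = Some y.
Proof.
elim/code_ind2.
- by [].
- by [].
- by [].
- move=> f gs IHf IHgs s s' v y ss; rewrite !run_comp.
  case E: (allsome _) => [ys|] // H.
  suff -> : allsome [seq run s' g v | g <- gs] = Some ys by exact: IHf H.
  elim: IHgs ys E {H} => [|g gs' IHg _ IH] ys //=.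
  case E1: (run s g v) => [y1|] //; case E2: (allsome _) => [ys1|] // [<-].
  by rewrite (IHg _ _ _ _ ss E1) (IH _ E2).
- move=> f g IHf IHg s s' [|n v] y ss //=.
  apply: precrun_mono => [y'|m z y']; [exact: IHf | exact: IHg].
- move=> f IHf s s' v y ss /=; case E: (srch _ _) => [| |m] // [<-].
  case: (srch_found E) => lms [h0 hlt].
  rewrite (@srch_found2 _ m) //.
  + exact: IHf h0.
  + move=> m' lm'; case: (hlt m' lm') => k hk; exists k; exact: IHf hk.
  + exact: leq_trans lms ss.
Qed.

Fixpoint ev_run c v y (H : ev c v y) {struct H} : exists s, run s c v = Some y
with evs_run gs v ys (H : evs gs v ys) {struct H} : exists s, allsome (map (fun g => run s g v) gs) = Some ys.
Proof.
- destruct H as [| | | | | |f v n H e].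
  + by exists 0.
  + by exists 0.
  + by exists 0; rewrite /= H.
  + case: (evs_run _ _ _ H) => s1 h1; case: (ev_run _ _ _ H0) => s2 h2.
    exists (maxn s1 s2); rewrite run_comp.
    have -> : allsome [seq run (maxn s1 s2) g v | g <- gs] = Some ys.
      move: h1; clear; elim: gs ys => [|g gs IH] ys //=.
      case E1: (run s1 g v) => [z|] //; case E2: (allsome _) => [zs|] // [<-].
      by rewrite (run_mono (leq_maxl s1 s2) E1) (IH _ E2).
    exact: run_mono (leq_maxr s1 s2) h2.
  + case: (ev_run _ _ _ H) => s h; exists s => /=; exact: h.
  + case: (ev_run _ _ _ H) => s1 h1; case: (ev_run _ _ _ H0) => s2 h2.
    exists (maxn s1 s2) => /=.
    move: (run_mono (leq_maxl s1 s2) h1) => /= ->.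
    exact: run_mono (leq_maxr s1 s2) h2.
  + case: (ev_run _ _ _ H) => s0 h0.
    have HH : forall m, (m < n)%N -> exists s k, run s f (m :: v) = Some k.+1.
      move=> m hm; case: (e m hm) => k hk; case: (ev_run _ _ _ hk) => s hs.
      by exists s, k.
    have [S HS] : exists S, forall m, (m < n)%N -> exists k, run S f (m :: v) = Some k.+1.
      clear -HH; elim: n HH => [|n IH] HH; first by exists 0.
      case: IH => [m hm|S HS]; first by apply: HH; exact: ltnW.
      case: (HH n (ltnSn n)) => s [k hk].
      exists (maxn S s) => m; rewrite ltnS leq_eqVlt => /orP [/eqP->|hm].
        by exists k; exact: run_mono (leq_maxr _ _) hk.
      by case: (HS m hm) => k' hk'; exists k'; exact: run_mono (leq_maxl _ _) hk'.
    exists (maxn (maxn s0 S) n.+1) => /=.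
    rewrite (@srch_found2 _ n) //.
    * exact: run_mono (leq_trans (leq_maxl _ _) (leq_maxl _ _)) h0.
    * move=> m hm; case: (HS m hm) => k hk; exists k.
      exact: run_mono (leq_trans (leq_maxr _ _) (leq_maxl _ _)) hk.
    * exact: leq_maxr.
- destruct H.
  + by exists 0.
  + case: (ev_run _ _ _ H) => s1 h1; case: (evs_run _ _ _ H0) => s2 h2.
    exists (maxn s1 s2) => /=; rewrite (run_mono (leq_maxl s1 s2) h1).
    suff -> : allsome [seq run (maxn s1 s2) g v | g <- gs] = Some ys by [].
    move: h2; clear; elim: gs ys => [|g gs IH] ys //=.
    case E1: (run s2 g v) => [z|] //; case E2: (allsome _) => [zs|] // [<-].
    by rewrite (run_mono (leq_maxr s1 s2) E1) (IH _ E2).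
Qed.

Definition cmp n (f : seq nat -> nat) := exists c, forall v, size v = n -> ev c v (f v).

Lemma cmp_ext n f g : (forall v, size v = n -> f v = g v) -> cmp n f -> cmp n g.
Proof. by move=> H [c Hc]; exists c => v hv; rewrite -H //; apply: Hc. Qed.

Lemma cmp_comps n fs : (forall f, List.In f fs -> cmp n f) ->
  exists gs, forall v, size v = n -> evs gs v (map (fun f => f v) fs).
Proof.
elim: fs => [|f fs IH] H; first by exists nil => v _; constructor.
case: (H f (List.in_eq _ _)) => c hc.
case: IH => [h hh|gs hgs]; first by apply: H; right.
by exists (c :: gs) => v hv; constructor; [apply: hc | apply: hgs].
Qed.

Lemma cmp_comp n F fs : cmp (size fs) F -> (forall f, List.In f fs -> cmp n f) ->
  cmp n (fun v => F (map (fun f => f v) fs)).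
Proof.
move=> [cF hF] /cmp_comps [gs hgs]; exists (Comp cF gs) => v hv.
by apply: ev_comp (hgs v hv) _; apply: hF; rewrite size_map.
Qed.

Lemma cmp_const n k : cmp n (fun _ => k).
Proof.
elim: k => [|k [c hc]]; first by exists Zero => v _; constructor.
exists (Comp Succ [:: c]) => v hv; apply: ev_comp; first by constructor; [apply: hc|constructor].
constructor.
Qed.

Lemma cmp_proj n i : (i < n)%N -> cmp n (fun v => nth 0 v i).
Proof. by move=> h; exists (Proj i) => v hv; constructor; rewrite hv. Qed.

Fixpoint PR (F G : seq nat -> nat) (x : nat) (v : seq nat) : nat :=
  match x with 0 => F v | m.+1 => G (m :: PR F G m v :: v) end.

Lemma cmp_prec n F G : cmp n F -> cmp n.+2 G -> cmp n.+1 (fun v => PR F G (head 0 v) (behead v)).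
Proof.
move=> [cf hf] [cg hg]; exists (Prec cf cg) => [[|x v]] //= [hv].
elim: x => [|x IH] /=; first by constructor; apply: hf.
by apply: ev_precS IH _; apply: hg => /=; rewrite hv.
Qed.

Lemma cmp_mu n F f : cmp n.+1 F ->
  (forall v, size v = n -> F (f v :: v) = 0 /\ forall m, (m < f v)%N -> F (m :: v) != 0) -> cmp n f.
Proof.
move=> [c hc] H; exists (Mu c) => v hv; case: (H v hv) => h0 h1.
constructor; first by rewrite -h0; apply: hc; rewrite /= hv.
move=> m hm; move: (h1 m hm); case E: (F (m :: v)) => [|k] // _.
by exists k; rewrite -E; apply: hc; rewrite /= hv.
Qed.

Lemma cmp_op2 (op : nat -> nat -> nat) n f g : cmp 2 (fun v => op (nth 0 v 0) (nth 0 v 1)) ->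
  cmp n f -> cmp n g -> cmp n (fun v => op (f v) (g v)).
Proof.
move=> ho hf hg.
have := @cmp_comp n _ [:: f; g] ho; apply.
by move=> h [<-|[<-|[]]].
Qed.

Lemma cmp_op1 (op : nat -> nat) n f : cmp 1 (fun v => op (nth 0 v 0)) -> cmp n f -> cmp n (fun v => op (f v)).
Proof.
move=> ho hf; have := @cmp_comp n _ [:: f] ho; apply.
by move=> h [<-|[]].
Qed.

Lemma size2 (v : seq nat) : size v = 2 -> v = [:: nth 0 v 0; nth 0 v 1].
Proof. by case: v => [|a [|b [|]]]. Qed.

Lemma cmp_add n f g : cmp n f -> cmp n g -> cmp n (fun v => f v + g v).
Proof.
apply: cmp_op2.
have h := @cmp_prec 1 (fun v => nth 0 v 0) (fun v => (nth 0 v 1).+1) (cmp_proj (ltn0Sn 0)).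
have /h : cmp 3 (fun v => (nth 0 v 1).+1).
  by apply: (@cmp_op1 succn); [exists Succ => [[|a [|]]] //; constructor | apply: cmp_proj].
apply: cmp_ext => v /size2 -> /=.
by elim: (nth 0 v 0) => //= x ->.
Qed.

Lemma cmp_mul n f g : cmp n f -> cmp n g -> cmp n (fun v => f v * g v).
Proof.
apply: cmp_op2.
have h := @cmp_prec 1 (fun v => 0) (fun v => nth 0 v 1 + nth 0 v 2) (cmp_const _ _).
have /h : cmp 3 (fun v => nth 0 v 1 + nth 0 v 2) by apply: cmp_add; apply: cmp_proj.
apply: cmp_ext => v /size2 -> /=.
by elim: (nth 0 v 0) => //= x ->; rewrite mulSn addnC.
Qed.

Lemma cmp_pred n f : cmp n f -> cmp n (fun v => (f v).-1).
Proof.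
apply: cmp_op1.
have h := @cmp_prec 0 (fun v => 0) (fun v => nth 0 v 0) (cmp_const _ _).
have /h : cmp 2 (fun v => nth 0 v 0) by apply: cmp_proj.
apply: cmp_ext => [[|a [|]]] //= _.
by case: a.
Qed.

Lemma cmp_sub n f g : cmp n f -> cmp n g -> cmp n (fun v => f v - g v).
Proof.
move=> hf hg; apply: (@cmp_op2 (fun a b => b - a)) hg hf.
have h := @cmp_prec 1 (fun v => nth 0 v 0) (fun v => (nth 0 v 1).-1) (cmp_proj (ltn0Sn 0)).
have /h : cmp 3 (fun v => (nth 0 v 1).-1) by apply: cmp_pred; apply: cmp_proj.
apply: cmp_ext => v /size2 -> /=.
by elim: (nth 0 v 0) => [|x /= ->]; rewrite ?subn0 ?subnS.
Qed.

Lemma cmp_pow2 n f : cmp n f -> cmp n (fun v => 2 ^ f v).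
Proof.
apply: cmp_op1.
have h := @cmp_prec 0 (fun v => 1) (fun v => nth 0 v 1 + nth 0 v 1) (cmp_const _ _).
have /h : cmp 2 (fun v => nth 0 v 1 + nth 0 v 1) by apply: cmp_add; apply: cmp_proj.
apply: cmp_ext => [[|a [|]]] //= _.
by elim: a => //= a ->; rewrite expnS mul2n addnn.
Qed.

Fixpoint sumto (h : nat -> nat) x := match x with 0 => 0 | m.+1 => sumto h m + h m end.

Lemma map_nth_iota (u : seq nat) k m : size u = k + m -> map (nth 0 u) (iota k m) = drop k u.
Proof.
elim: m k => [|m IH] k hs /=; first by rewrite addn0 in hs; rewrite drop_oversize ?hs.
rewrite IH; last by rewrite hs addSnnS.
by rewrite [RHS](drop_nth 0) // hs -addSnnS leq_addr.
Qed.

Lemma In_mem (x : nat) s : List.In x s -> x \in s.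
Proof. elim: s => //= y s IH [->|h]; rewrite in_cons ?eqxx // IH ?orbT //. Qed.

Lemma cmp_projs n idx : all (fun i => i < n)%N idx ->
  forall f, List.In f (map (fun i => fun v : seq nat => nth 0 v i) idx) -> cmp n f.
Proof.
move=> H f /List.in_map_iff [i [<- hi]]; apply: cmp_proj.
by move/allP: H; apply; apply: In_mem.
Qed.

Lemma all_iota_lt n k m : (k + m <= n)%N -> all (fun i => i < n)%N (iota k m).
Proof.
move=> h; apply/allP => i; rewrite mem_iota => /andP [_ hi].
exact: leq_trans hi h.
Qed.

Lemma cmp_sum n f g : cmp n.+1 f -> cmp n g -> cmp n (fun v => sumto (fun i => f (i :: v)) (g v)).
Proof.
move=> hf hg.
have hf2 : cmp n.+2 (fun u => nth 0 u 1 + f (nth 0 u 0 :: drop 2 u)).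
  apply: cmp_add; first by apply: cmp_proj.
  have := @cmp_comp n.+2 f (map (fun i => fun v : seq nat => nth 0 v i) (0 :: iota 2 n)).
  rewrite size_map /= size_iota => /(_ hf) h.
  have /h : (forall f, List.In f (map (fun i => fun v : seq nat => nth 0 v i) (0 :: iota 2 n)) -> cmp n.+2 f).
    by apply: cmp_projs => /=; rewrite all_iota_lt // add2n.
  apply: cmp_ext => u hu /=; rewrite -map_comp /comp /=.
  rewrite (@map_nth_iota u 2 n) //; by rewrite hu add2n.
have h := cmp_prec (cmp_const n 0) hf2.
have := @cmp_comp n _ (g :: map (fun i => fun v : seq nat => nth 0 v i) (iota 0 n)).
rewrite /= size_map size_iota => /(_ _ h) h2.
have /h2 : (forall f, List.In f (g :: map (fun i => fun v : seq nat => nth 0 v i) (iota 0 n)) -> cmp n f).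
  move=> f' [<-|hin] //; apply: cmp_projs hin; exact: all_iota_lt.
apply: cmp_ext => v hv /=; rewrite -map_comp /comp /= (@map_nth_iota v 0 n) ?drop0 //.
by elim: (g v) => [|x IH] //=; rewrite IH drop0.
Qed.

Definition enc (o : option nat) := if o is Some y then y.+1 else 0.

Lemma cmp_nz n f : cmp n f -> cmp n (fun v => 1 - (1 - f v)).
Proof. by move=> h; apply: cmp_sub; [apply: cmp_const| apply: cmp_sub => //; apply: cmp_const]. Qed.
Lemma cmp_eq0 n f : cmp n f -> cmp n (fun v => 1 - f v).
Proof. by move=> h; apply: cmp_sub => //; apply: cmp_const. Qed.

Lemma cmp_reidx n k F (idx : seq nat) : size idx = k -> all (fun i => i < n)%N idx -> cmp k F ->
  cmp n (fun v => F (map (nth 0 v) idx)).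
Proof.
move=> hs ha hF.
have := @cmp_comp n F (map (fun i => fun v : seq nat => nth 0 v i) idx).
rewrite size_map hs => /(_ hF (cmp_projs ha)).
by apply: cmp_ext => v _; rewrite -map_comp.
Qed.

Lemma nz_enc o : 1 - (1 - enc o) = if o is Some _ then 1 else 0.
Proof. by case: o. Qed.

Lemma cmp_foldr n (h : code -> seq nat -> nat) gs :
  List.Forall (fun g => cmp n (h g)) gs -> cmp n (fun v => foldr (fun g acc => (1 - (1 - h g v)) * acc) 1 gs).
Proof.
elim => [|g gs' hg _ IH] /=; first by apply: cmp_const.
by apply: cmp_mul => //; apply: cmp_nz.
Qed.

Lemma allsome_some (h : code -> option nat) gs ys : allsome (map h gs) = Some ys ->
  ys = map (fun g => (enc (h g)).-1) gs /\ foldr (fun g acc => (1 - (1 - enc (h g))) * acc) 1 gs = 1.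
Proof.
elim: gs ys => [|g gs IH] ys /=; first by move=> [<-].
case E1: (h g) => [y|] //; case E2: (allsome _) => [zs|] // [<-].
by case: (IH _ E2) => -> ->.
Qed.

Lemma allsome_none (h : code -> option nat) gs : allsome (map h gs) = None ->
  foldr (fun g acc => (1 - (1 - enc (h g))) * acc) 1 gs = 0.
Proof.
elim: gs => [|g gs IH] //=.
case E1: (h g) => [y|] /=; last by rewrite mul0n.
case E2: (allsome _) => [zs|] //= _; by rewrite IH // muln0.
Qed.

Definition encst (x : st) := match x with Srch => 0 | Fail => 1 | Found m => m.+2 end.

Definition RF (c : code) (sv : seq nat) := enc (run (head 0 sv) c (behead sv)).

Lemma size_behead_n (sv : seq nat) n : size sv = n.+1 -> size (behead sv) = n.
Proof. by case: sv => //= a v [->]. Qed.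

Lemma compile : forall c n, cmp n.+1 (RF c).
Proof.
elim/code_ind2.
- move=> n; apply: cmp_ext (cmp_const _ 1) => sv _; by [].
- case=> [|n].
    by apply: cmp_ext (cmp_const _ 0) => [[|s [|]]].
  apply: cmp_ext (cmp_add (@cmp_proj n.+2 1 erefl) (cmp_const _ 2)) => [[|s [|x v]]] //= _.
  by rewrite /RF /= addn2.
- move=> i n; case: (ltnP i n) => hi.
    apply: cmp_ext (cmp_add (@cmp_proj n.+1 i.+1 hi) (cmp_const _ 1)) => [[|s v]] //= [hv].
    by rewrite /RF /= hv hi addn1.
  apply: cmp_ext (cmp_const _ 0) => [[|s v]] //= [hv].
  by rewrite /RF /= hv ltnNge hi.
- move=> f gs IHf IHgs n.
  have Hg : List.Forall (fun g => cmp n.+1 (RF g)) gs.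
    by elim: IHgs => [|g gs' hg _ IH]; constructor.
  have H1 := cmp_foldr Hg.
  have H2 : cmp n.+1 (fun sv => RF f (map (fun h => h sv) ((fun sv => nth 0 sv 0) :: map (fun g sv => (RF g sv).-1) gs))).
    apply: cmp_comp; first by rewrite /= size_map; apply: IHf.
    move=> h [<-|/List.in_map_iff [g [<- hin]]]; first by apply: cmp_proj.
    apply: cmp_pred; exact: (proj1 (List.Forall_forall _ _) Hg g hin).
  apply: cmp_ext (cmp_mul H1 H2) => [[|s v]] //= _.
  rewrite /RF /= -map_comp /comp /=.
  have := run_comp s f gs v; rewrite /= => ->.
  case E: (allsome _) => [ys|].
    by case: (allsome_some E) => -> ->; rewrite mul1n.
  by rewrite (allsome_none E).
- move=> f g IHf IHg; case=> [|m].
    by apply: cmp_ext (cmp_const _ 0) => [[|s [|]]].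
  pose G := fun u : seq nat => (1 - (1 - nth 0 u 1)) *
      RF g (nth 0 u 2 :: nth 0 u 0 :: (nth 0 u 1).-1 :: drop 3 u).
  have HG : cmp m.+3 G.
    apply: cmp_mul; first by apply: cmp_nz; apply: cmp_proj.
    have := @cmp_comp m.+3 (RF g) ([:: fun u => nth 0 u 2; fun u => nth 0 u 0; fun u => (nth 0 u 1).-1] ++
                          map (fun i => fun v : seq nat => nth 0 v i) (iota 3 m)).
    rewrite size_cat size_map size_iota /= => /(_ (IHg _)) h.
    have /h : forall f0, List.In f0 [:: (fun u => nth 0 u 2), (fun u => nth 0 u 0), (fun u => (nth 0 u 1).-1) &
                          map (fun i => fun v : seq nat => nth 0 v i) (iota 3 m)] -> cmp m.+3 f0.
      move=> f0 [e|[e|[e|hin]]]; try subst f0.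
      + exact: cmp_proj.
      + exact: cmp_proj.
      + by apply: cmp_pred; apply: cmp_proj.
      + apply: (@cmp_projs m.+3 (iota 3 m) _ f0 hin); apply: all_iota_lt; by rewrite add3n.
    apply: cmp_ext => u hu /=.
    have e : size u = 3 + m by rewrite hu add3n.
    by rewrite -map_comp (@map_nth_iota u 3 m e).
  have HQ := cmp_prec (IHf m) HG.
  have h := @cmp_reidx m.+2 m.+2 _ (1 :: 0 :: iota 2 m) ltac:(by rewrite /= ?size_iota)
     ltac:(by rewrite /= all_iota_lt // add2n) HQ.
  apply: cmp_ext h => [[|s [|x v]]] //= [hv].
  rewrite (@map_nth_iota [:: s, x & v] 2 m) /=; last by rewrite hv add2n.
  rewrite /RF /=.
  rewrite drop0; elim: x => [|x IH] //=.
  rewrite IH /G /= drop0; case: (precrun _ _ x) => [z|] //=.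
  by rewrite mul1n /RF.
- move=> f IHf n.
  pose G := fun u : seq nat => (1 - nth 0 u 1) *
      ((1 - RF f (nth 0 u 2 :: nth 0 u 0 :: drop 3 u)) +
       (1 - (RF f (nth 0 u 2 :: nth 0 u 0 :: drop 3 u)).-1) *
         (1 - (1 - RF f (nth 0 u 2 :: nth 0 u 0 :: drop 3 u))) * (nth 0 u 0 + 2)) + nth 0 u 1.
  have HR : cmp n.+3 (fun u => RF f (nth 0 u 2 :: nth 0 u 0 :: drop 3 u)).
    have h := @cmp_reidx n.+3 n.+2 (RF f) (2 :: 0 :: iota 3 n) ltac:(by rewrite /= ?size_iota)
     ltac:(by rewrite /= all_iota_lt // add3n) (IHf _).
    apply: cmp_ext h => u hu /=.
    by rewrite (@map_nth_iota u 3 n) // hu add3n.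
  have HG : cmp n.+3 G.
    apply: cmp_add; last by apply: cmp_proj.
    apply: cmp_mul; first by apply: cmp_eq0; apply: cmp_proj.
    apply: cmp_add; first by apply: cmp_eq0.
    apply: cmp_mul; last by apply: cmp_add; [apply: cmp_proj | apply: cmp_const].
    apply: cmp_mul; first by apply: cmp_eq0; apply: cmp_pred.
    by apply: cmp_nz.
  have HQ := cmp_prec (cmp_const n.+1 0) HG.
  have h := @cmp_reidx n.+1 n.+2 _ (0 :: 0 :: iota 1 n) ltac:(by rewrite /= ?size_iota)
     ltac:(by rewrite /= all_iota_lt // add1n) HQ.
  apply: cmp_ext (cmp_pred h) => [[|s v]] //= [hv].
  rewrite (@map_nth_iota (s :: v) 1 n) /=; last by rewrite hv add1n.
  rewrite /RF /= drop0.
  suff -> : forall j, PR (fun=> 0) G j (s :: v) = encst (srch (fun m => run s f (m :: v)) j).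
    by case: (srch _ _).
  elim=> [|j IH] //=.
  rewrite IH /G /= /RF /=.
  rewrite drop0; case: (srch _ j) => [| |m] /=.
  - case: (run s f (j :: v)) => [[|k]|] /=; lia.
  - lia.
  - lia.
Qed.

Fixpoint Wf (w : nat -> nat) k := match k with 0 => 0 | k'.+1 => 2 ^ k' * Wf w k' + w k' + 1 end.
Definition cnt (E : nat -> nat -> nat) s m := sumto (fun y => nat_of_bool (E s y != 0)) m.
Definition badf E w s k := sumto (fun m => nat_of_bool ((Wf w k.+1 <= m) && (m < 2 ^ k * (m - cnt E s m))))
  (Wf w k.+2).

Lemma count_sumto (S : pred nat) n : count S (iota 0 n) = sumto (fun y => nat_of_bool (S y)) n.
Proof. elim: n => // n IH; by rewrite -[n.+1]addn1 iotaD count_cat IH /= add0n addn0 addn1. Qed.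

Lemma sumto_le h g n : (forall i, i < n -> h i <= g i) -> sumto h n <= sumto g n.
Proof.
elim: n => //= n IH H; apply: leq_add; first by apply: IH => i hi; apply: H; exact: ltnW.
exact: H.
Qed.

Lemma sumto_eq h g n : (forall i, i < n -> h i = g i) -> sumto h n = sumto g n.
Proof. by move=> H; apply/eqP; rewrite eqn_leq !sumto_le // => i /H ->. Qed.

Lemma sumto_ge_term h i x : i < x -> h i <= sumto h x.
Proof.
elim: x => //= x IH; rewrite ltnS leq_eqVlt => /orP [/eqP->|/IH h1]; first exact: leq_addl.
exact: leq_trans h1 (leq_addr _ _).
Qed.

Lemma sumto_le_n h n : (forall i, h i <= 1) -> sumto h n <= n.
Proof. by move=> H; elim: n => //= n IH; rewrite -addn1 leq_add. Qed.

Lemma sumto_eq0 h N : sumto h N = 0 -> forall i, i < N -> h i = 0.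
Proof. by move=> H i hi; move: (sumto_ge_term h hi); rewrite H leqn0 => /eqP. Qed.

Lemma sumto_shift f a n : (forall i, f i <= 1) ->
  sumto f n <= sumto (fun y => (a <= y) * f y) n + a.
Proof.
move=> H; suff : sumto f n <= sumto (fun y => (a <= y) * f y) n + minn n a.
  move=> h; apply: (leq_trans h); rewrite leq_add2l; exact: geq_minr.
elim: n => //= n IH; case: (leqP a n) => han.
  rewrite mul1n (minn_idPr (leq_trans han (leqnSn n))) -addnA (addnC (f n)) addnA leq_add2r.
  by rewrite (minn_idPr han) in IH.
rewrite mul0n addn0 (minn_idPl han) (minn_idPl (ltnW han)) in IH *.
have := H n; lia.
Qed.

Lemma Wf_S w k : Wf w k < Wf w k.+1.
Proof. rewrite /=; have := leq_pmull (Wf w k) (expn_gt0 2 k); lia. Qed.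

Lemma Wf_mono w i j : i <= j -> Wf w i <= Wf w j.
Proof.
move=> h; rewrite -(subnKC h); elim: (j - i) => [|d IH]; first by rewrite addn0.
by rewrite addnS (leq_trans IH) // ltnW // Wf_S.
Qed.

Lemma Wf_ge w k : k <= Wf w k.
Proof. elim: k => //= k IH; have := Wf_S w k; rewrite /=; lia. Qed.

Lemma Wf_mul w k : 2 ^ k * Wf w k <= Wf w k.+1.
Proof. rewrite /=; lia. Qed.

Lemma Wf_w w k : w k < Wf w k.+1.
Proof. rewrite /=; lia. Qed.

Lemma bracket (V : nat -> nat) a n : (forall k, V k < V k.+1) -> V a <= n ->
  exists k, a <= k /\ V k <= n < V k.+1.
Proof.
move=> HV Ha.
have Hd : forall d, d <= V (a + d).
  elim=> // d IH; rewrite addnS; exact: leq_ltn_trans IH (HV _).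
suff : forall d, (exists k, a <= k /\ V k <= n < V k.+1) \/ V (a + d) <= n.
  by case/(_ n.+1) => // h; have := Hd n.+1; lia.
elim=> [|d IH]; first by right; rewrite addn0.
case: IH => [h|IH]; first by left.
case: (leqP (V (a + d).+1) n) => h; first by right; rewrite addnS.
by left; exists (a + d); rewrite leq_addr IH.
Qed.

Section RatPart.
Import Order.TTheory GRing.Theory Num.Theory.

Local Open Scope ring_scope.

Lemma rho_conv n c k : (0 < n)%N -> (c <= n)%N ->
  (1 - (2%:R ^+ k)^-1 <= (c%:R / n%:R : rat)) = (2 ^ k * (n - c) <= n)%N.
Proof.
move=> n0 cn; have p0 : 0 < (2%:R ^+ k : rat) by rewrite exprn_gt0.
rewrite ler_pdivlMr ?ltr0n // -(ler_nat rat) natrM natrB // natrX.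
rewrite -(ler_pM2l p0) mulrA mulrBr mulr1 mulfV ?gt_eqF // mulrBr.
set x := (n%:R : rat); set y := (c%:R : rat); set p := (2%:R ^+ k : rat).
by rewrite mulrBl mul1r !lerBlDr addrC.
Qed.

Lemma rho_le1 n S : (0 < n)%N -> rho n S <= 1.
Proof.
move=> n0; rewrite /rho ler_pdivrMr ?ltr0n // mul1r ler_nat.
by rewrite (leq_trans (count_size _ _)) // size_iota.
Qed.

Lemma wit_dens w S : witnesses_density1 w S -> has_density1 S.
Proof.
move=> hw eps e0.
have ie0 : 0 <= eps^-1 by rewrite invr_ge0 ltW.
have := archi_boundP ie0; set K := Num.Def.archi_bound _ => hK.
exists (w K) => n n0 wn.
have h1 := hw K n n0 wn; have h2 := rho_le1 S n0.
have hp : (2%:R ^+ K : rat)^-1 < eps.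
  rewrite invf_plt ?posrE ?exprn_gt0 //.
  apply: (lt_le_trans hK); rewrite -natrX ler_nat.
  exact: ltnW (ltn_expl _ (isT : (1 < 2)%N)).
rewrite ler0_norm ?subr_le0 // opprB; apply: le_lt_trans hp.
by rewrite lerBlDr addrC -lerBlDr.
Qed.

End RatPart.

Lemma stage_all (A : pred nat) (E : nat -> nat -> nat)
  (HEc : forall x, A x -> exists s, E s x != 0)
  (HEm : forall s s' x, s <= s' -> E s x != 0 -> E s' x != 0) N :
  exists s, forall y, y < N -> A y -> E s y != 0.
Proof.
elim: N => [|N [s Hs]]; first by exists 0.
case: (boolP (A N)) => hA.
  case: (HEc _ hA) => s1 h1; exists (maxn s s1) => y; rewrite ltnS leq_eqVlt => /orP [/eqP->|hy] hAy.
    exact: HEm (leq_maxr _ _) h1.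
  exact: HEm (leq_maxl _ _) (Hs _ hy hAy).
exists s => y; rewrite ltnS leq_eqVlt => /orP [/eqP->|hy] hAy; first by rewrite hAy in hA.
exact: Hs.
Qed.

Lemma cnt_count (A : pred nat) (E : nat -> nat -> nat)
  (HEs : forall s x, E s x != 0 -> A x) s m :
  (forall y, y < m -> A y -> E s y != 0) -> cnt E s m = count A (iota 0 m).
Proof.
move=> H; rewrite count_sumto /cnt; apply: sumto_eq => y hy.
case: (boolP (A y)) => hA; first by rewrite (H _ hy hA).
by case: (boolP (E s y != 0)) => // /HEs; rewrite (negbTE hA).
Qed.

Lemma sumto0 h N : (forall i, i < N -> h i = 0) -> sumto h N = 0.
Proof. move=> H; rewrite (@sumto_eq h (fun _ => 0)) //; by elim: N {H} => //= N ->. Qed.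

Lemma bad_term (A : pred nat) (E : nat -> nat -> nat) w (hw : witnesses_density1 w A)
  (HEs : forall s x, E s x != 0 -> A x)
  (HEc : forall x, A x -> exists s, E s x != 0)
  (HEm : forall s s' x, s <= s' -> E s x != 0 -> E s' x != 0) k :
  exists s, badf E w s k == 0.
Proof.
case: (stage_all HEc HEm (Wf w k.+2)) => s Hs; exists s; apply/eqP.
apply: sumto0 => m hm.
case: (leqP (Wf w k.+1) m) => //= hWm.
have Hc : cnt E s m = count A (iota 0 m).
  apply: cnt_count => // y hy; apply: Hs; exact: ltn_trans hy hm.
have m0 : 0 < m by have := Wf_w w k; lia.
have := hw k m m0 (leq_trans (ltnW (Wf_w w k)) hWm).
rewrite /rho rho_conv //; last by rewrite (leq_trans (count_size _ _)) // size_iota.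
by rewrite Hc leqNgt => /negbTE ->.
Qed.

Lemma dens_B (E : nat -> nat -> nat) w (t : nat -> nat)
  (HEm : forall s s' x, s <= s' -> E s x != 0 -> E s' x != 0)
  (Ht : forall k, badf E w (t k) k = 0) :
  witnesses_density1 (fun K => Wf w K.+2) (fun x => E (sumto t x.+1) x != 0).
Proof.
move=> K n n0 hn.
have [j [hKj /andP [hj1 hj2]]] := @bracket (fun j => Wf w j.+1) K.+1 n (fun k => Wf_S w k.+1) hn.
have := sumto_eq0 (Ht j) hj2; rewrite hj1 /= => /eqP; rewrite eqb0 -leqNgt => hcn.
rewrite /rho.
set cB := count _ _.
have hcB : cB <= n by rewrite (leq_trans (count_size _ _)) // size_iota.
rewrite /rho rho_conv //.
have h1 : cnt E (t j) n <= cB + Wf w j.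
  rewrite /cnt; apply: (leq_trans (@sumto_shift _ (Wf w j) n _)); first by move=> i; case: (_ != 0).
  rewrite leq_add2r /cB count_sumto; apply: sumto_le => y hy.
  case: (leqP (Wf w j) y) => hy2; last by rewrite mul0n.
  rewrite mul1n; case: (boolP (E (t j) y != 0)) => //= hE.
  rewrite (HEm _ _ _ _ hE) //; apply: (@sumto_ge_term t j y.+1).
  by rewrite ltnS (leq_trans (Wf_ge w j)).
have h2 := Wf_mul w j.
have h3 : 2 ^ K.+1 <= 2 ^ j by rewrite leq_exp2l.
have h4 : Wf w j.+1 <= n by [].
set cn := cnt E (t j) n in hcn h1.
set Q := 2 ^ j in hcn h2 h3; set Wj := Wf w j in h1 h2.
rewrite expnS in h3; set P := 2 ^ K in h3 *.
have e1 : Q * (n - cB) <= Q * (n - cn) + Q * Wj by rewrite -mulnDr leq_mul2l; lia.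
have e2 : 2 * P * (n - cB) <= Q * (n - cB) by rewrite leq_mul2r h3 orbT.
nia.
Qed.

Lemma nzE x : nat_of_bool (x != 0) = 1 - (1 - x). Proof. by case: x. Qed.
Lemma lebE a b : nat_of_bool (a <= b) = 1 - (a - b).
Proof. case: (leqP a b) => h; [by rewrite (eqP h) | lia]. Qed.
Lemma ltbE a b : nat_of_bool (a < b) = 1 - (1 - (b - a)).
Proof. case: (leqP b a) => h /=; lia. Qed.
Lemma andbE (a b : bool) : nat_of_bool (a && b) = a * b.
Proof. by case: a; case: b. Qed.

Lemma size1 (v : seq nat) : size v = 1 -> v = [:: nth 0 v 0].
Proof. by case: v => [|a [|]]. Qed.

Lemma cmp_succ n f : cmp n f -> cmp n (fun v => (f v).+1).
Proof. move=> h; apply: cmp_ext (cmp_add h (cmp_const n 1)) => v _; by rewrite addn1. Qed.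

Section Comp.
Variables (E : nat -> nat -> nat) (w : nat -> nat).
Hypothesis cE : cmp 2 (fun v => E (nth 0 v 0) (nth 0 v 1)).
Hypothesis cw : cmp 1 (fun v => w (nth 0 v 0)).

Lemma cmp_E n f g : cmp n f -> cmp n g -> cmp n (fun v => E (f v) (g v)).
Proof. exact: cmp_op2. Qed.
Lemma cmp_w n f : cmp n f -> cmp n (fun v => w (f v)).
Proof. exact: cmp_op1. Qed.

Lemma cmp_Wf n f : cmp n f -> cmp n (fun v => Wf w (f v)).
Proof.
apply: cmp_op1.
have h := @cmp_prec 0 (fun _ => 0) (fun u => 2 ^ nth 0 u 0 * nth 0 u 1 + w (nth 0 u 0) + 1) (cmp_const _ _).
have /h : cmp 2 (fun u => 2 ^ nth 0 u 0 * nth 0 u 1 + w (nth 0 u 0) + 1).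
  apply: cmp_add; last by apply: cmp_const.
  apply: cmp_add; last by apply: cmp_w; apply: cmp_proj.
  by apply: cmp_mul; [apply: cmp_pow2|]; apply: cmp_proj.
apply: cmp_ext => [[|x [|]]] //= _.
by elim: x => //= x ->.
Qed.

Lemma cmp_cnt n f g : cmp n f -> cmp n g -> cmp n (fun v => cnt E (f v) (g v)).
Proof.
apply: cmp_op2.
have h := @cmp_sum 2 (fun u => 1 - (1 - E (nth 0 u 1) (nth 0 u 0))) (fun v => nth 0 v 1).
have /h {h} : cmp 3 (fun u => 1 - (1 - E (nth 0 u 1) (nth 0 u 0))).
  by apply: cmp_nz; apply: cmp_E; apply: cmp_proj.
move=> /(_ (@cmp_proj 2 1 erefl)).
apply: cmp_ext => v /size2 -> /=; rewrite /cnt; apply: sumto_eq => i _.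
by rewrite nzE.
Qed.

Lemma cmp_bad : cmp 2 (fun v => badf E w (nth 0 v 0) (nth 0 v 1)).
Proof.
pose f := fun u : seq nat => (1 - (Wf w (nth 0 u 2).+1 - nth 0 u 0)) *
   (1 - (1 - (2 ^ nth 0 u 2 * (nth 0 u 0 - cnt E (nth 0 u 1) (nth 0 u 0)) - nth 0 u 0))).
have cf : cmp 3 f.
  apply: cmp_mul.
    apply: cmp_eq0; apply: cmp_sub; last by apply: cmp_proj.
    by apply: cmp_Wf; apply: cmp_succ; apply: cmp_proj.
  apply: cmp_nz; apply: cmp_sub; last by apply: cmp_proj.
  apply: cmp_mul; first by apply: cmp_pow2; apply: cmp_proj.
  by apply: cmp_sub; [apply: cmp_proj| apply: cmp_cnt; apply: cmp_proj].
have h := @cmp_sum 2 f (fun v => Wf w (nth 0 v 1).+2) cf.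
have /h : cmp 2 (fun v => Wf w (nth 0 v 1).+2).
  by apply: cmp_Wf; apply: cmp_succ; apply: cmp_succ; apply: cmp_proj.
apply: cmp_ext => v /size2 -> /=; rewrite /badf; apply: sumto_eq => i _.
by rewrite /f /= andbE lebE ltbE.
Qed.
End Comp.

Theorem mainTheorem11 (A : pred nat) :
  ce A -> density1_effectively A ->
  exists B : pred nat,
    {subset B <= A} /\ computable_set B /\ density1_effectively B.
Proof.
move=> [c hc] [_ [w [[cw hcw] hw]]].
pose E := fun s x => enc (run s c [:: x]).
have HEs : forall s x, E s x != 0 -> A x.
  move=> s x; rewrite /E; case E1: (run s c [:: x]) => [y|] // _.
  by apply/hc; exists y; exact: run_sound E1.
have HEc : forall x, A x -> exists s, E s x != 0.
  move=> x /hc [y /ev_run [s hs]]; by exists s; rewrite /E hs.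
have HEm : forall s s' x, (s <= s')%N -> E s x != 0 -> E s' x != 0.
  move=> s s' x ss; rewrite /E; case E1: (run s c [:: x]) => [y|] // _.
  by rewrite (run_mono ss E1).
have cE : cmp 2 (fun v => E (nth 0 v 0) (nth 0 v 1)).
  apply: cmp_ext (compile c 1) => v /size2 -> //.
have cW : cmp 1 (fun v => w (nth 0 v 0)).
  by exists cw => v /size1 ->; apply: hcw.
have tex := bad_term hw HEs HEc HEm.
pose t := fun k => ex_minn (tex k).
have Ht : forall k, badf E w (t k) k = 0.
  by move=> k; rewrite /t; case: ex_minnP => m /eqP.
have Htm : forall k m, (m < t k)%N -> badf E w m k != 0.
  move=> k m; rewrite /t; case: ex_minnP => m0 _ Hmin hm; apply/negP => /Hmin.
  by rewrite leqNgt hm.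
have ct : cmp 1 (fun v => t (nth 0 v 0)).
  apply: (cmp_mu (cmp_bad cE cW)) => v /size1 -> /=.
  split; first exact: Ht.
  by move=> m /Htm.
have cT : cmp 1 (fun v => sumto t (nth 0 v 0).+1).
  have h := @cmp_sum 1 (fun u => t (nth 0 u 0)) (fun v => (nth 0 v 0).+1).
  have /h : cmp 2 (fun u => t (nth 0 u 0)) by apply: cmp_op1 ct _; apply: cmp_proj.
  move=> /(_ (cmp_succ (@cmp_proj 1 0 erefl))).
  by apply: cmp_ext => v /size1 -> /=.
exists (fun x => E (sumto t x.+1) x != 0); split; first by move=> x /HEs.
split.
  have h : cmp 1 (fun v => 1 - (1 - E (sumto t (nth 0 v 0).+1) (nth 0 v 0))).
    by apply: cmp_nz; apply: cmp_E => //; apply: cmp_proj.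
  case: h => cb hb; exists cb => x; rewrite nzE; exact: (hb [:: x]).
have hwB := dens_B HEm Ht.
split; first exact: wit_dens hwB.
exists (fun K => Wf w K.+2); split => //.
have h : cmp 1 (fun v => Wf w (nth 0 v 0).+2).
  by apply: cmp_Wf => //; apply: cmp_succ; apply: cmp_succ; apply: cmp_proj.
case: h => cb hb; exists cb => x; exact: (hb [:: x]).
Qed.
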